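(* Let $K$ be a number field and let $E$, $a$, $b$, $\mathcal B$, $S_0$ be as in the context, with conditions (a)--(g) holding. For $t\in K\setminus\mathcal B$ let $E_t$ be the elliptic curve $y^2=x^3+a(t)x^2+b(t)x$ and $E'_t$ the elliptic curve $y^2=x^3-2a(t)x^2+(a(t)^2-4b(t))x$ over $K$. Then for all but finitely many nonzero prime ideals $\mathfrak p\notin S_0$ of $\mathcal O_K$, if $t\in K\setminus\mathcal B$ satisfies $v_{\mathfrak p}(t)<0$, then $E_t$ and $E'_t$ both have good reduction at $\mathfrak p$.
   Context: Identify $K(T)$ with the function field of $\mathbb P^1_K$, and $\mathbb P^1(K)=K\cup\{\infty\}$. $E$ is an elliptic curve over $K(T)$ given by $y^2=x^3+ax^2+bx$ with $a,b\in\mathcal O_K[T]$, minimal over $K[T]$, with $2$-torsion point $(0,0)$; $E'$ is $y^2=x^3-2ax^2+(a^2-4b)x$; $\Delta=16(a^2-4b)b^2$. $\delta_E,\delta_{E'}$ into $K(T)^\times/(K(T)^\times)^2$ are the connecting homomorphisms for the dual isogeny and the $2$-isogeny $E\to E'$ with kernel $\langle(0,0)\rangle$: $\delta_E(O)=1$, $\delta_E((0,0))=b$, $\delta_E((x,y))=x$ otherwise; $\delta_{E'}(O)=1$, $\delta_{E'}((0,0))=a^2-4b$, $\delta_{E'}((x,y))=x$ otherwise (modulo squares). For closed points $P$ of $\mathbb P^1_K$, Tate's algorithm over $K(T)_P$ gives Kodaira symbols, reduction types, Tamagawa numbers $c_P$. $\mathcal B$: closed points of bad reduction of $E$; $\mathcal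 A\subseteq\mathcal B$: additive ones; $\mathcal M$: $P\in\mathcal B\setminus\mathcal A$ where $E,E'$ have symbols $\mathrm I_{2n},\mathrm I_n$ ($n\ge1$); $\mathcal M'$: those with $\mathrm I_n,\mathrm I_{2n}$. Assume $\mathcal B\subseteq\mathcal O_K\subseteq\mathbb P^1(K)$ (so $E$ has good reduction at $\infty$) and: (a) every point of $\mathcal B$ has degree $1$; (b) $\mathcal M,\mathcal M'\ne\emptyset$; (c) for $P\in\mathcal M$, $E'$ is split multiplicative at $P$ or has symbol $\mathrm I_n$, $n$ odd; (d) for $P\in\mathcal M'$, $E$ is split multiplicative at $P$ or has symbol $\mathrm I_n$, $n$ odd; (e) if $E$ has symbol $\mathrm I_n^*$ at $P\in\mathcal A$ then $c_P(E)=c_P(E')=4$; (f) $\dim_{\mathbb F_2}\delta_E(E(K(T)))\ge|\mathcal A|+|\mathcal M|-1$; (g) $\dim_{\mathbb F_2}\delta_{E'}(E'(K(T)))\ge|\mathcal A|+|\mathcal M'|-1$. $S_0$ is a finite set of nonzero prime ideals of $\mathcal O_K$ containing all those dividing $6\prod_{\alpha,\beta\in\mathcal B,\alpha\ne\beta}(\alpha-\beta)$ or dividing the leading coefficient of $\Delta$, such that $\mathcal O_{K,S_0}$ is a PID. $v_{\mathfrak p}$ denotes the normalized $\mathfrak p$-adic valuation. *)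

(* Defs.v *)
From HB Require Import structures.
From mathcomp Require Import all_boot all_order all_algebra all_field.
Set Implicit Arguments.
Unset Strict Implicit.
Unset Printing Implicit Defensive.
Import GRing.Theory.
Local Open Scope ring_scope.

(* General Weierstrass models y^2 + a1 xy + a3 y = x^3 + a2 x^2 + a4 x + a6 *)
(* over a field F, and their standard invariants (Silverman III.1).     *)
Section Weierstrass.
Variable F : fieldType.

Record wmodel := WModel { wa1 : F; wa2 : F; wa3 : F; wa4 : F; wa6 : F }.

Definition wb2 (E : wmodel) := wa1 E ^+ 2 + 4 * wa2 E.
Definition wb4 (E : wmodel) := 2 * wa4 E + wa1 E * wa3 E.
Definition wb6 (E : wmodel) := wa3 E ^+ 2 + 4 * wa6 E.
Definition wb8 (E : wmodel) :=
  wa1 E ^+ 2 * wa6 E + 4 * wa2 E * wa6 E - wa1 E * wa3 E * wa4 E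
  + wa2 E * wa3 E ^+ 2 - wa4 E ^+ 2.
Definition wc4 (E : wmodel) := wb2 E ^+ 2 - 24 * wb4 E.
Definition wc6 (E : wmodel) := - wb2 E ^+ 3 + 36 * wb2 E * wb4 E - 216 * wb6 E.
Definition wdisc (E : wmodel) :=
  - wb2 E ^+ 2 * wb8 E - 8 * wb4 E ^+ 3 - 27 * wb6 E ^+ 2
  + 9 * wb2 E * wb4 E * wb6 E.

(* E' is obtained from E by the change of variables
   x = u^2 x' + r, y = u^3 y' + s u^2 x' + w  (Silverman, Table 3.1). *)
Definition wiso (E E' : wmodel) : Prop :=
  exists u r s w : F, u != 0 /\
    u * wa1 E' = wa1 E + 2 * s /\
    u ^+ 2 * wa2 E' = wa2 E - s * wa1 E + 3 * r - s ^+ 2 /\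
    u ^+ 3 * wa3 E' = wa3 E + r * wa1 E + 2 * w /\
    u ^+ 4 * wa4 E' = wa4 E - s * wa3 E + 2 * r * wa2 E
                      - (w + r * s) * wa1 E + 3 * r ^+ 2 - 2 * s * w /\
    u ^+ 6 * wa6 E' = wa6 E + r * wa4 E + r ^+ 2 * wa2 E + r ^+ 3
                      - w * wa3 E - w ^+ 2 - r * w * wa1 E.

(* ---- Local data: a discrete valuation ring O of F (given as a predicate)
        with uniformizer pi.  v(x) >= k  iff  x / pi^k \in O. ---- *)
Variable O : F -> Prop.

Definition unitO (x : F) := O x /\ O x^-1.
Definition integral (E : wmodel) :=
  O (wa1 E) /\ O (wa2 E) /\ O (wa3 E) /\ O (wa4 E) /\ O (wa6 E).

Definition good_red (E : wmodel) :=
  exists E', wiso E E' /\ integral E' /\ unitO (wdisc E').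

Variable pi : F.

Definition vge (x : F) (k : nat) := O (x / pi ^+ k).
Definition vexact (x : F) (k : nat) := unitO (x / pi ^+ k).

Definition minimal_model (E : wmodel) :=
  integral E /\ forall E', wiso E E' -> integral E' ->
    forall k, vge (wdisc E) k -> vge (wdisc E') k.

(* Kodaira symbol I_n (n >= 1): multiplicative reduction with
   v(Delta_min) = n (an integral model with unit c4 is minimal) *)
Definition mult_In (n : nat) (E : wmodel) :=
  (0 < n)%N /\ exists E', wiso E E' /\ integral E' /\ unitO (wc4 E')
                          /\ vexact (wdisc E') n.

Definition multiplicative (E : wmodel) := exists n, mult_In n E.
Definition additive (E : wmodel) := ~ good_red E /\ ~ multiplicative E.

(* split multiplicative: node moved to (0,0); the tangent lines
   y = m x at the node (m^2 + a1 m - a2 = 0 in the residue field) are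
   defined over the residue field *)
Definition split_mult (E : wmodel) :=
  exists E', wiso E E' /\ integral E' /\ unitO (wc4 E') /\
    vge (wdisc E') 1 /\ vge (wa3 E') 1 /\ vge (wa4 E') 1 /\ vge (wa6 E') 1 /\
    exists m, O m /\ vge (m ^+ 2 + wa1 E' * m - wa2 E') 1.

(* ---- Kodaira symbol I_n^* and Tamagawa number 4, following steps 6-7
        (and the subprocedure of step 7) of Tate's algorithm ---- *)
Definition step6_shape (E : wmodel) :=
  integral E /\ vge (wa1 E) 1 /\ vge (wa2 E) 1 /\ vge (wa3 E) 2 /\
  vge (wa4 E) 2 /\ vge (wa6 E) 3.

(* tam4 = true : additionally the Tamagawa number is 4 *)
Definition Instar_model (n : nat) (tam4 : bool) (E : wmodel) : Prop :=
  step6_shape E /\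
  if n == 0%N then
    (* P(T) = T^3 + a21 T^2 + a42 T + a63 has distinct roots mod pi;
       c = 1 + #roots in the residue field *)
    let A := wa2 E / pi in let B := wa4 E / pi ^+ 2 in
    let C := wa6 E / pi ^+ 3 in
    unitO (A ^+ 2 * B ^+ 2 - 4 * B ^+ 3 - 4 * A ^+ 3 * C - 27 * C ^+ 2
           + 18 * A * B * C) /\
    (tam4 -> exists r1 r2 r3, O r1 /\ O r2 /\ O r3 /\
       vge (A + (r1 + r2 + r3)) 1 /\
       vge (B - (r1 * r2 + r1 * r3 + r2 * r3)) 1 /\
       vge (C + r1 * r2 * r3) 1)
  else if odd n then
    (* n = 2m - 1 *)
    let m := n.+1./2 in
    vexact (wa2 E) 1 /\ vge (wa3 E) m.+1 /\ vge (wa4 E) m.+2 /\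
    vge (wa6 E) (m.*2.+2) /\
    let A := wa3 E / pi ^+ m.+1 in let B := wa6 E / pi ^+ (m.*2.+2) in
    unitO (A ^+ 2 + 4 * B) /\
    (tam4 -> exists z, O z /\ vge (z ^+ 2 + A * z - B) 1)
  else
    let m := n./2 in
    vexact (wa2 E) 1 /\ vge (wa3 E) m.+2 /\ vge (wa4 E) m.+2 /\
    vge (wa6 E) (m.*2.+3) /\
    let al := wa2 E / pi in let be := wa4 E / pi ^+ m.+2 in
    let ga := wa6 E / pi ^+ (m.*2.+3) in
    unitO (be ^+ 2 - 4 * al * ga) /\
    (tam4 -> exists z, O z /\ vge (al * z ^+ 2 + be * z + ga) 1).

Definition kodaira_Instar (n : nat) (E : wmodel) :=
  exists E', wiso E E' /\ Instar_model n false E'.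

Definition tamagawa4_Instar (E : wmodel) :=
  exists m E', wiso E E' /\ Instar_model m true E'.

End Weierstrass.

Section FunctionField.
Variable K : fieldType.
Definition FT := {fraction {poly K}}.
Definition tof (p : {poly K}) : FT := FracField.tofrac p.

(* finite closed points of P^1_K <-> monic irreducible polynomials *)
Definition closed_fin (q : {poly K}) := q \is monic /\ irreducible_poly q.
(* local ring of K(T) at the finite closed point q *)
Definition O_fin (q : {poly K}) (f : FT) :=
  exists g h : {poly K}, ~~ (q %| h) /\ f = tof g / tof h.
(* local ring at infinity, uniformizer 1/T *)
Definition O_inf (f : FT) :=
  exists g h : {poly K}, h != 0 /\ (size g <= size h)%N /\ f = tof g / tof h.
Definition pi_inf : FT := (tof 'X)^-1.

Definition model2 (F : fieldType) (A B : F) : wmodel F := WModel 0 A 0 B 0.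

(* points of y^2 = x^3 + A x^2 + B x over K(T); None is the origin O *)
Definition on_curve2 (A B : FT) (P : option (FT * FT)) :=
  match P with None => True | Some (x, y) => y ^+ 2 = x ^+ 3 + A * x ^+ 2 + B * x end.
(* connecting homomorphism: O |-> 1, (0,0) |-> B, (x,y) |-> x *)
Definition delta2 (B : FT) (P : option (FT * FT)) : FT :=
  match P with None => 1 | Some (x, _) => if x == 0 then B else x end.
End FunctionField.

(* elements of a field independent in F^x / (F^x)^2 (F_2-linearly) *)
Definition sq_indep (F : fieldType) (s : seq F) :=
  forall m : bitseq, size m = size s -> has id m ->
    ~ exists z : F, \prod_(x <- mask m s) x = z ^+ 2.

Section NumberField.
Variable K : fieldExtType rat.

Definition isInt (x : K) :=
  exists p : {poly int}, p \is monic /\ root (map_poly (fun z : int => z%:~R) p) x.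

(* nonzero prime ideal of O_K, given as a subset of K *)
Definition nzprime (p : K -> Prop) :=
  (forall x, p x -> isInt x) /\ p 0 /\
  (forall x y, p x -> p y -> p (x - y)) /\
  (forall r x, isInt r -> p x -> p (r * x)) /\
  ~ p 1 /\
  (forall x y, isInt x -> isInt y -> p (x * y) -> p x \/ p y) /\
  (exists x, x != 0 /\ p x).

(* localization O_{K,p}; v_p(x) >= 0 iff Oloc p x *)
Definition Oloc (p : K -> Prop) (x : K) :=
  exists y z, isInt y /\ isInt z /\ ~ p z /\ x = y / z.

Fixpoint inP (p : K -> Prop) (S : seq (K -> Prop)) : Prop :=
  match S with
  | [::] => False
  | q :: S' => (forall x, p x <-> q x) \/ inP p S'
  end.

Definition OS (S : seq (K -> Prop)) (x : K) :=
  forall p, nzprime p -> ~ inP p S -> Oloc p x.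

Definition is_PID_OS (S : seq (K -> Prop)) :=
  forall I : K -> Prop,
    (forall x, I x -> OS S x) -> I 0 ->
    (forall x y, I x -> I y -> I (x + y)) ->
    (forall r x, OS S r -> I x -> I (r * x)) ->
    exists g, OS S g /\ forall x, I x <-> exists r, OS S r /\ x = r * g.
End NumberField.

(* Main.v *)
Require Import Defs.
From HB Require Import structures.
From mathcomp Require Import all_boot all_order all_algebra all_field.
From mathcomp Require Import zify ring lra.
From Stdlib Require Import Classical.
Local Open Scope ring_scope.

Module Aux.
Import GRing.Theory Num.Theory.
Local Open Scope ring_scope.
Set Implicit Arguments.
Unset Strict Implicit.
Unset Printing Implicit Defensive.


Section IntSpan.
Variable F : fieldType.

Definition zspan (Y : seq F) (v : F) :=
  exists c : nat -> int, v = \sum_(i < size Y) Y`_i *~ c i.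

Lemma zspan0 Y : zspan Y 0.
Proof. by exists (fun _ => 0); rewrite big1 // => i _; rewrite mulr0z. Qed.

Lemma zspanD Y u v : zspan Y u -> zspan Y v -> zspan Y (u + v).
Proof.
move=> [c ->] [d ->]; exists (fun i => c i + d i).
by rewrite -big_split /=; apply: eq_bigr => i _; rewrite mulrzDr.
Qed.

Lemma zspanZ Y u (k : int) : zspan Y u -> zspan Y (u *~ k).
Proof.
move=> [c ->]; exists (fun i => c i * k).
rewrite mulrz_suml; apply: eq_bigr => i _; by rewrite -mulrzA.
Qed.

Lemma zspanN Y u : zspan Y u -> zspan Y (- u).
Proof. by move=> h; rewrite -mulrN1z; apply: zspanZ. Qed.

Lemma zspan_sum Y (I : Type) (r : seq I) (f : I -> F) :
  (forall i, zspan Y (f i)) -> zspan Y (\sum_(i <- r) f i).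
Proof.
move=> h; elim/big_ind: _ => //; [exact: zspan0 | exact: zspanD].
Qed.

Lemma zspan_nth Y k : (k < size Y)%N -> zspan Y Y`_k.
Proof.
move=> hk; exists (fun i => (i == k)%:R).
rewrite (bigD1 (Ordinal hk)) //= eqxx mulr1z big1 ?addr0 // => i /negPf.
by move=> h; rewrite -(inj_eq val_inj) /= in h; rewrite h mulr0z.
Qed.

Lemma zspan_stable Y w v :
  (forall i, (i < size Y)%N -> zspan Y (w * Y`_i)) -> zspan Y v -> zspan Y (w * v).
Proof.
move=> h [c ->]; rewrite mulr_sumr; apply: zspan_sum => i.
by rewrite mulrzAr; apply: zspanZ; apply: h.
Qed.

Lemma root_of_zspan Y z :
  zspan Y 1 -> (forall i, (i < size Y)%N -> zspan Y (z * Y`_i)) ->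
  exists p : {poly int}, p \is monic /\ root (map_poly (fun k : int => k%:~R) p) z.
Proof.
move=> h1 hz.
have: forall j : 'I_(size Y), exists c : nat -> int,
   z * Y`_j = \sum_(i < size Y) Y`_i *~ c i.
  by move=> j; apply: hz.
case/fin_all_exists => c hc.
pose A := \matrix_(i < size Y, j < size Y) c j i.
pose v := \row_(i < size Y) Y`_i.
exists (char_poly A); split; first exact: char_poly_monic.
have -> : map_poly (fun k : int => k%:~R) (char_poly A) =
          map_poly (intr : {rmorphism int -> F}) (char_poly A) by [].
rewrite map_char_poly -eigenvalue_root_char; apply/eigenvalueP; exists v.
  apply/rowP => j; rewrite !mxE hc; apply: eq_bigr => i _.
  by rewrite !mxE mulrzr.
apply/negP => /eqP v0; case: h1 => c1 h1.
have : (1 : F) = 0.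
  rewrite h1 big1 // => i _.
  by have := congr1 (fun M : 'rV_(size Y) => M 0 i) v0; rewrite !mxE => ->; rewrite mul0rz.
by move/eqP; rewrite oner_eq0.
Qed.
End IntSpan.

Section IsIntRing.
Variable K : fieldExtType rat.

Lemma isInt_zspan (Y : seq K) z :
  zspan Y 1 -> (forall i, (i < size Y)%N -> zspan Y (z * Y`_i)) -> isInt z.
Proof. exact: root_of_zspan. Qed.

Lemma zspan_mem (Y : seq K) v : v \in Y -> zspan Y v.
Proof. by move=> h; rewrite -(nth_index 0 h); apply: zspan_nth; rewrite index_mem. Qed.

Lemma reduce_pow (x : K) (P : {poly int}) :
  P \is monic -> root (map_poly (fun k : int => k%:~R) P) x ->
  forall i, ((size P).-1 <= i)%N ->
  x ^+ i = - \sum_(l < (size P).-1) x ^+ (i - (size P).-1 + l) *~ P`_l.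
Proof.
move=> mP rP i hi.
have szP : size P = (size P).-1.+1.
  by rewrite prednK // size_poly_gt0 monic_neq0.
set n := (size P).-1 in hi szP *.
have hsz : size (map_poly (fun k : int => k%:~R : K) P) = size P.
  by apply: size_map_poly_id0; rewrite (monicP mP) oner_eq0.
move: rP; rewrite /root horner_coef hsz szP big_ord_recr /= coef_map /=.
have -> : P`_n = 1 by rewrite -(monicP mP) lead_coefE szP.
rewrite mul1r addrC addr_eq0 => /eqP xn.
rewrite -(subnK hi) exprD xn mulrN mulr_sumr; congr (- _).
apply: eq_bigr => l _; rewrite coef_map /= addnK exprD -mulrzr.
by rewrite mulrCA mulrzAr mul1r mulrzl.
Qed.

Lemma isInt_addM (x y : K) : isInt x -> isInt y -> isInt (x + y) /\ isInt (x * y).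
Proof.
case=> P [mP rP]; case=> Q [mQ rQ].
set n := (size P).-1; set m := (size Q).-1.
pose Y := [seq x ^+ i * y ^+ j | i <- iota 0 n, j <- iota 0 m].
have c1 : forall j, (j < m)%N -> forall i, zspan Y (x ^+ i * y ^+ j).
  move=> j hj i; elim: i {-2}i (leqnn i) => [|N IH] i hi.
    move: hi; rewrite leqn0 => /eqP ->.
    case: (ltnP 0 n) => hn.
      by apply: zspan_mem; apply: allpairs_f; rewrite mem_iota //.
    rewrite (reduce_pow mP rP (i:=0)) // mulNr; apply: zspanN.
    by rewrite mulr_suml; apply: zspan_sum => l; case: l => l /=; rewrite -/n; lia.
  case: (ltnP i n) => hin.
    by apply: zspan_mem; apply: allpairs_f; rewrite mem_iota //.
  rewrite (reduce_pow mP rP hin) mulNr; apply: zspanN.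
  rewrite mulr_suml; apply: zspan_sum => -[l hl] /=.
  rewrite mulrzAl; apply: zspanZ; apply: IH; rewrite -/n in hl *.
  have : (i <= N.+1)%N by []. 
  lia.
have c2 : forall j i, zspan Y (x ^+ i * y ^+ j).
  move=> j; elim: j {-2}j (leqnn j) => [|N IH] j hj i.
    case: (ltnP j m) => hjm; first exact: c1.
    rewrite (reduce_pow mQ rQ hjm) mulrN; apply: zspanN.
    rewrite mulr_sumr; apply: zspan_sum => -[l hl] /=.
    rewrite -/m in hl *; lia.
  case: (ltnP j m) => hjm; first exact: c1.
  rewrite (reduce_pow mQ rQ hjm) mulrN; apply: zspanN.
  rewrite mulr_sumr; apply: zspan_sum => -[l hl] /=.
  rewrite mulrzAr; apply: zspanZ; apply: IH; rewrite -/m in hl *.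
  have : (j <= N.+1)%N by [].
  lia.
have h1 : zspan Y 1 by have := c2 0%N 0%N; rewrite !expr0 mulr1.
have hY : forall k, (k < size Y)%N -> exists i j, Y`_k = x ^+ i * y ^+ j.
  move=> k hk; have /allpairsP [[i j] [_ _ ->]] := mem_nth 0 hk.
  by exists i, j.
split; apply: (isInt_zspan h1) => k hk; have [i [j ->]] := hY k hk.
  rewrite mulrDl; apply: zspanD.
    by rewrite mulrA -exprS; apply: c2.
  by rewrite mulrCA -exprS; apply: c2.
by rewrite mulrACA -!exprS; apply: c2.
Qed.

Lemma isIntD (x y : K) : isInt x -> isInt y -> isInt (x + y).
Proof. by move=> hx hy; case: (isInt_addM hx hy). Qed.
Lemma isIntM (x y : K) : isInt x -> isInt y -> isInt (x * y).
Proof. by move=> hx hy; case: (isInt_addM hx hy). Qed.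
Lemma isInt_int (k : int) : isInt (k%:~R : K).
Proof.
exists ('X - k%:P); split; first exact: monicXsubC.
by rewrite map_polyXsubC /= root_XsubC.
Qed.
Lemma isInt0 : isInt (0 : K). Proof. by have := isInt_int 0. Qed.
Lemma isInt1 : isInt (1 : K). Proof. by have := isInt_int 1. Qed.
Lemma isIntN (x : K) : isInt x -> isInt (- x).
Proof. by move=> hx; rewrite -mulN1r; apply: isIntM => //; have := isInt_int (-1). Qed.
Lemma isIntB (x y : K) : isInt x -> isInt y -> isInt (x - y).
Proof. by move=> hx hy; apply: isIntD => //; apply: isIntN. Qed.
Lemma isIntX (x : K) n : isInt x -> isInt (x ^+ n).
Proof. by move=> hx; elim: n => [|n IH]; [rewrite expr0; exact: isInt1 | rewrite exprS; exact: isIntM]. Qed.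
Lemma isInt_nat n : isInt (n%:R : K).
Proof. by have := isInt_int n. Qed.
Lemma isInt_sum (I : Type) (r : seq I) (f : I -> K) :
  (forall i, isInt (f i)) -> isInt (\sum_(i <- r) f i).
Proof. by move=> h; elim/big_ind: _ => //; [exact: isInt0 | exact: isIntD]. Qed.

End IsIntRing.

Lemma alg_den (K : fieldExtType rat) (t : K) :
  exists d : nat, (0 < d)%N /\ isInt (d%:R * t).
Proof.
have /polyOver1P [q Dq] := minPolyOver 1%AS t.
have mq : q \is monic by rewrite -(map_monic (in_alg K)) -Dq monic_minPoly.
have rq : root (map_poly (in_alg K) q) t by rewrite -Dq root_minPoly.
set n := (size q).-1.
have szq : size q = n.+1 by rewrite prednK // size_poly_gt0 monic_neq0.
pose d := (\prod_(i < size q) `|denq q`_i|)%N.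
have dpos : (0 < d)%N by apply: prodn_gt0 => i; rewrite absz_gt0 denq_neq0.
have hz : forall i, exists z : int, q`_i * d%:R == z%:~R.
  move=> i; case: (ltnP i (size q)) => hi; last first.
    by exists 0; rewrite nth_default // mul0r.
  rewrite /d (bigD1 (Ordinal hi)) //= natrM.
  exists (numq q`_i * (\prod_(j < size q | j != Ordinal hi) `|denq q`_j|)%N).
  rewrite intrM numqE mulrA; apply/eqP; congr (_ * _ * _).
  rewrite -[(`|denq _|%N)%:R]/((`|denq q`_i|%N : int)%:~R).
  by rewrite gez0_abs // ltW // denq_gt0.
pose z i := xchoose (hz i).
have Ez i : q`_i * d%:R = (z i)%:~R by apply/eqP; exact: (xchooseP (hz i)).
pose r : {poly int} :=
  \poly_(i < n.+1) (if i == n then 1 else z i * (d%:Z) ^+ (n - i.+1)).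
have rn : r`_n = 1 by rewrite coef_poly ltnSn eqxx.
have szr : size r = n.+1.
  by apply: size_poly_eq; rewrite /= eqxx oner_eq0.
have qn : q`_n = 1 by rewrite -(monicP mq) lead_coefE szq.
exists d; split => //; exists r; split.
  by rewrite monicE lead_coefE szr rn.
have hsz : size (map_poly (fun k : int => k%:~R : K) r) = size r.
  by apply: size_map_poly_id0; rewrite lead_coefE szr rn oner_eq0.
have hsq : size (map_poly (in_alg K) q) = size q.
  by apply: size_map_poly_id0; rewrite lead_coefE szq qn rmorph1 oner_eq0.
move: rq; rewrite /root horner_coef hsq szq => /eqP rq.
rewrite /root horner_coef hsz szr.
have -> : \sum_(i < n.+1) (map_poly (fun k : int => k%:~R : K) r)`_i * (d%:R * t) ^+ i
   = (d%:R : K) ^+ n * \sum_(i < n.+1) (map_poly (in_alg K) q)`_i * t ^+ i;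
  last by rewrite rq mulr0.
rewrite mulr_sumr; apply: eq_bigr => i _.
rewrite !coef_map coef_poly ltn_ord /=.
case: eqP => [hin|hin].
  by rewrite hin qn scale1r !mul1r exprMn.
have hi : (i < n)%N by have := ltn_ord i; rewrite ltnS leq_eqVlt => /predU1P [] //.
rewrite intrM -[((z i)%:~R : K)](rmorph_int (in_alg K)) -Ez rmorphM rmorph_nat.
rewrite rmorphXn /= exprMn.
have en : (d%:R : K) ^+ n = d%:R * d%:R ^+ (n - i.+1) * d%:R ^+ i.
  by rewrite -exprS -exprD; congr (_ ^+ _); lia.
rewrite en; change ((d%:Z)%:~R : K) with (d%:R : K); ring.
Qed.

Section Local.
Variable K : fieldExtType rat.
Variable p : K -> Prop.
Hypothesis hp : nzprime p.

Let pI : forall x, p x -> isInt x. Proof. by case: hp. Qed.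
Let p0 : p 0. Proof. by case: hp => _ []. Qed.
Let pB : forall x y, p x -> p y -> p (x - y). Proof. by case: hp => _ [_ []]. Qed.
Let pM : forall r x, isInt r -> p x -> p (r * x). Proof. by case: hp => _ [_ [_ []]]. Qed.
Let p1 : ~ p 1. Proof. by case: hp => _ [_ [_ [_ []]]]. Qed.
Let pP : forall x y, isInt x -> isInt y -> p (x * y) -> p x \/ p y.
Proof. by case: hp => _ [_ [_ [_ [_ []]]]]. Qed.

Lemma pN x : p x -> p (- x).
Proof. by move=> h; rewrite -sub0r; apply: pB. Qed.
Lemma pD x y : p x -> p y -> p (x + y).
Proof. by move=> hx hy; rewrite -[y]opprK; apply: pB => //; apply: pN. Qed.
Lemma pMr r x : isInt r -> p x -> p (x * r).
Proof. by move=> hr hx; rewrite mulrC; apply: pM. Qed.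
Lemma pnotM z z' : isInt z -> isInt z' -> ~ p z -> ~ p z' -> ~ p (z * z').
Proof. by move=> hz hz' nz nz' /(pP hz hz') []. Qed.
Lemma pneq0 z : ~ p z -> z != 0.
Proof. by move=> nz; apply/eqP => z0; apply: nz; rewrite z0. Qed.

Lemma Oloc_int x : isInt x -> Oloc p x.
Proof. by move=> hx; exists x, 1; split => //; split; [exact: isInt1 | split => //; rewrite divr1]. Qed.

Lemma OlocD x x' : Oloc p x -> Oloc p x' -> Oloc p (x + x').
Proof.
move=> [y [z [hy [hz [nz ->]]]]] [y' [z' [hy' [hz' [nz' ->]]]]].
exists (y * z' + y' * z), (z * z'); split; first by apply: isIntD; apply: isIntM.
split; first exact: isIntM.
split; first exact: pnotM.
have := pneq0 nz; have := pneq0 nz' => h1 h2; field.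
by rewrite h1 h2.
Qed.

Lemma OlocM x x' : Oloc p x -> Oloc p x' -> Oloc p (x * x').
Proof.
move=> [y [z [hy [hz [nz ->]]]]] [y' [z' [hy' [hz' [nz' ->]]]]].
exists (y * y'), (z * z'); split; first exact: isIntM.
split; first exact: isIntM.
split; first exact: pnotM.
have := pneq0 nz; have := pneq0 nz' => h1 h2; field.
by rewrite h1 h2.
Qed.

Lemma OlocN x : Oloc p x -> Oloc p (- x).
Proof.
move=> h; rewrite -mulN1r; apply: OlocM => //; apply: Oloc_int.
by have := isInt_int K (-1).
Qed.

Lemma OlocB x x' : Oloc p x -> Oloc p x' -> Oloc p (x - x').
Proof. by move=> h h'; apply: OlocD => //; apply: OlocN. Qed.

Lemma OlocX x n : Oloc p x -> Oloc p (x ^+ n).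
Proof.
move=> h; elim: n => [|n IH]; first by rewrite expr0; apply: Oloc_int; exact: isInt1.
by rewrite exprS; apply: OlocM.
Qed.

Definition Mp (x : K) :=
  exists y z, isInt y /\ isInt z /\ p y /\ ~ p z /\ x = y / z.

Lemma Mp_Oloc x : Mp x -> Oloc p x.
Proof. by move=> [y [z [hy [hz [py [nz ->]]]]]]; exists y, z. Qed.

Lemma MpM r x : Oloc p r -> Mp x -> Mp (r * x).
Proof.
move=> [y [z [hy [hz [nz ->]]]]] [y' [z' [hy' [hz' [py' [nz' ->]]]]]].
exists (y * y'), (z * z'); split; first exact: isIntM.
split; first exact: isIntM.
split; first exact: pM.
split; first exact: pnotM.
have := pneq0 nz; have := pneq0 nz' => h1 h2; field.
by rewrite h1 h2.
Qed.

Lemma Mp_unit c e : isInt c -> ~ p c -> Mp e ->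
  Oloc p (c + e) /\ Oloc p (c + e)^-1.
Proof.
move=> hc nc [y [z [hy [hz [py [nz ->]]]]]].
have nzc : ~ p (c * z + y).
  move=> h; have : p (c * z + y - y) by apply: pB.
  by rewrite addrK; apply: pnotM.
have hi : isInt (c * z + y) by apply: isIntD => //; apply: isIntM.
have h1 := pneq0 nz; have h2 := pneq0 nzc.
split.
  exists (c * z + y), z; do 3!split => //.
  by field.
exists z, (c * z + y); do 3!split => //.
have -> : c + y / z = (c * z + y) / z by field.
by rewrite invf_div.
Qed.

End Local.

Lemma natK_neq0 (K : fieldExtType rat) (d : nat) : (0 < d)%N -> (d%:R : K) != 0.
Proof.
move=> hd; rewrite -(rmorph_nat (in_alg K)) fmorph_eq0 pnatr_eq0.
by rewrite -lt0n.
Qed.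

Section Valuation.
Variable K : fieldExtType rat.
Variable S0 : seq (K -> Prop).
Hypothesis PID : is_PID_OS S0.
Variable p : K -> Prop.
Hypothesis hp : nzprime p.
Hypothesis pS0 : ~ inP p S0.

Lemma OS_int x : isInt x -> OS S0 x.
Proof. by move=> hx q hq _; apply: Oloc_int. Qed.
Lemma OSD x y : OS S0 x -> OS S0 y -> OS S0 (x + y).
Proof. by move=> hx hy q hq nq; apply: OlocD => //; [apply: hx | apply: hy]. Qed.
Lemma OSM x y : OS S0 x -> OS S0 y -> OS S0 (x * y).
Proof. by move=> hx hy q hq nq; apply: OlocM => //; [apply: hx | apply: hy]. Qed.
Lemma OSX x n : OS S0 x -> OS S0 (x ^+ n).
Proof. by move=> hx q hq nq; apply: OlocX => //; apply: hx. Qed.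
Lemma OS1 : OS S0 1. Proof. exact/OS_int/isInt1. Qed.
Lemma OS0 : OS S0 0. Proof. exact/OS_int/isInt0. Qed.

Definition Ip x := OS S0 x /\ Mp p x.

Lemma Ip_ideal : exists g, OS S0 g /\ forall x, Ip x <-> exists r, OS S0 r /\ x = r * g.
Proof.
apply: PID.
- by move=> x [].
- split; first exact: OS0.
  exists 0, 1; split; first exact: isInt0.
  split; first exact: isInt1.
  split; first by case: hp => _ [].
  split; first by case: hp => _ [_ [_ [_ []]]].
  by rewrite mul0r.
- move=> x y [hx mx] [hy my]; split; first exact: OSD.
  move: mx my => [a [b [ha [hb [pa [nb ->]]]]]] [a' [b' [ha' [hb' [pa' [nb' ->]]]]]].
  exists (a * b' + a' * b), (b * b'); split; first by apply: isIntD; apply: isIntM.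
  split; first exact: isIntM.
  split; first by apply: pD => //; apply: pMr.
  split; first exact: pnotM.
  have := pneq0 hp nb; have := pneq0 hp nb' => h1 h2; field.
  by rewrite h1 h2.
- move=> r x hr [hx mx]; split; first exact: OSM.
  by apply: MpM => //; apply: hr.
Qed.

Variable pi : K.
Hypothesis Hpi : OS S0 pi /\ forall x, Ip x <-> exists r, OS S0 r /\ x = r * pi.

Lemma Ip_pi : Ip pi.
Proof. by apply/(proj2 Hpi); exists 1; split; [exact: OS1 | rewrite mul1r]. Qed.

Lemma Mp_pi : Mp p pi. Proof. by case: Ip_pi. Qed.

Lemma not_Ip1 : ~ Ip 1.
Proof.
move=> [_ [y [z [hy [hz [py [nz e]]]]]]].
have zn := pneq0 hp nz.
have : y = z by rewrite -[y](divfK zn) -e mul1r.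
by move=> yz; apply: nz; rewrite -yz.
Qed.

Lemma pi_neq0 : pi != 0.
Proof.
apply/eqP => pi0.
case: hp => pI [_ [_ [_ [_ [_ [x0 [nx0 px0]]]]]]].
have : Ip x0.
  split; first exact/OS_int/pI.
  exists x0, 1; split; first exact: pI.
  split; first exact: isInt1.
  by split => //; split; [by case: hp => _ [_ [_ [_ []]]] | rewrite divr1].
move/(proj2 Hpi) => [r [_ e]]; move: nx0; by rewrite e pi0 mulr0 eqxx.
Qed.

Lemma inv_pi_notOS : ~ OS S0 pi^-1.
Proof.
move=> h; apply: not_Ip1; apply/(proj2 Hpi); exists pi^-1; split => //.
by rewrite mulVf // pi_neq0.
Qed.

Lemma fin_order x : OS S0 x -> x != 0 ->
  exists k, OS S0 (x / pi ^+ k) /\ ~ OS S0 (x / pi ^+ k.+1).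
Proof.
move=> hx nx.
have pin := pi_neq0.
have [k nk] : exists k, ~ OS S0 (x / pi ^+ k).
  apply: Classical_Prop.NNPP => H.
  have H' : forall k, OS S0 (x / pi ^+ k).
    by move=> k; apply: Classical_Prop.NNPP => h; apply: H; exists k.
  pose J y := exists k r, OS S0 r /\ y = r * (x / pi ^+ k).
  have : exists g, OS S0 g /\ forall y, J y <-> exists r, OS S0 r /\ y = r * g.
    apply: PID.
    - by move=> y [k [r [hr ->]]]; apply: OSM.
    - by exists 0%N, 0; split; [exact: OS0 | rewrite mul0r].
    - move=> y1 y2 [k1 [r1 [hr1 ->]]] [k2 [r2 [hr2 ->]]].
      exists (k1 + k2)%N, (r1 * pi ^+ k2 + r2 * pi ^+ k1); split.
        by apply: OSD; apply: OSM => //; apply: OSX; case: Hpi.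
      rewrite exprD; field.
      by rewrite !expf_neq0.
    - move=> r y hr [k [r1 [hr1 ->]]]; exists k, (r * r1); split; first exact: OSM.
      by rewrite mulrA.
  move=> [g [hg Hg]].
  have [k0 [r0 [hr0 eg]]] : J g by apply/Hg; exists 1; split; [exact: OS1 | rewrite mul1r].
  have : J (x / pi ^+ k0.+1) by exists k0.+1, 1; split; [exact: OS1 | rewrite mul1r].
  move/Hg => [r1 [hr1 e1]].
  apply: inv_pi_notOS.
  have -> : pi^-1 = r1 * r0.
    move: e1; rewrite eg exprS => e1.
    have xk : x / pi ^+ k0 != 0 by rewrite mulf_neq0 // invr_eq0 expf_neq0.
    apply: (mulIf xk); rewrite -mulrA -e1; field.
    by rewrite expf_neq0.
  exact: OSM.
elim: k nk => [|k IH] nk.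
  by exfalso; apply: nk; rewrite expr0 divr1.
case: (Classical_Prop.classic (OS S0 (x / pi ^+ k))) => h.
  by exists k.
exact: IH.
Qed.

Lemma unit_part u : OS S0 u -> ~ OS S0 (u / pi) -> Oloc p u /\ Oloc p u^-1.
Proof.
move=> hu nu; split; first exact: hu.
have [y [z [hy [hz [nz e]]]]] := hu p hp pS0.
case: (Classical_Prop.classic (p y)) => py.
  exfalso; apply: nu.
  have : Ip u by split => //; exists y, z.
  move/(proj2 Hpi) => [r [hr ->]]; rewrite mulfK //; exact: pi_neq0.
exists z, y; do 3!split => //.
by rewrite e invf_div.
Qed.

Lemma valuation t : ~ Oloc p t -> Mp p t^-1.
Proof.
move=> nt.
have t0 : t != 0.
  apply/eqP => t0; apply: nt; rewrite t0; apply: Oloc_int => //; exact: isInt0.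
have [d [dpos hdt]] := alg_den t.
have dn := natK_neq0 K dpos.
have pin := pi_neq0.
have [k1 [h1 n1]] := fin_order (OS_int hdt) (mulf_neq0 dn t0).
have [k2 [h2 n2]] := fin_order (OS_int (isInt_nat K d)) dn.
have n1' : ~ OS S0 (d%:R * t / pi ^+ k1 / pi) by rewrite -mulrA -invfM -exprSr.
have n2' : ~ OS S0 ((d%:R : K) / pi ^+ k2 / pi) by rewrite -mulrA -invfM -exprSr.
have [u1 u1i] := unit_part h1 n1'.
have [u2 u2i] := unit_part h2 n2'.
set U1 := d%:R * t / pi ^+ k1 in u1 u1i h1 n1 n1'.
set U2 := (d%:R : K) / pi ^+ k2 in u2 u2i h2 n2 n2'.
have U1n : U1 != 0 by rewrite /U1 !mulf_neq0 // invr_eq0 expf_neq0.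
have U2n : U2 != 0 by rewrite /U2 !mulf_neq0 // invr_eq0 expf_neq0.
have et : t = pi ^+ k1 * U1 / (pi ^+ k2 * U2).
  rewrite /U1 /U2; field.
  by rewrite dn !expf_neq0.
have pO : Oloc p pi by case: Hpi => h _; apply: h.
case: (leqP k2 k1) => hk.
  exfalso; apply: nt; rewrite et.
  have -> : pi ^+ k1 * U1 / (pi ^+ k2 * U2) = pi ^+ (k1 - k2) * U1 * U2^-1.
    rewrite -{1}(subnK hk) exprD; field.
    by apply/andP; split; last exact: expf_neq0.
  by apply: OlocM => //; apply: OlocM => //; apply: OlocX.
have -> : t^-1 = (pi ^+ (k2 - k1.+1) * U2 * U1^-1) * pi.
  rewrite et -{1}(subnK hk) exprD exprS; field.
  by rewrite U1n U2n pin /= !expf_neq0.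
apply: (MpM hp); last exact: Mp_pi.
by apply: OlocM => //; apply: OlocM => //; apply: OlocX.
Qed.

End Valuation.

Section EvalRev.
Variable K : fieldExtType rat.
Variable p : K -> Prop.
Hypothesis hp : nzprime p.

Lemma Mp0 : Mp p 0.
Proof.
exists 0, 1; split; first exact: isInt0.
split; first exact: isInt1.
split; first by case: hp => _ [].
split; first by case: hp => _ [_ [_ [_ []]]].
by rewrite mul0r.
Qed.

Lemma MpD x y : Mp p x -> Mp p y -> Mp p (x + y).
Proof.
move=> [a [b [ha [hb [pa [nb ->]]]]]] [a' [b' [ha' [hb' [pa' [nb' ->]]]]]].
exists (a * b' + a' * b), (b * b'); split; first by apply: isIntD; apply: isIntM.
split; first exact: isIntM.
split; first by apply: pD => //; apply: pMr.
split; first exact: pnotM.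
have := pneq0 hp nb; have := pneq0 hp nb' => h1 h2; field.
by rewrite h1 h2.
Qed.

Lemma eval_rev (t s : K) (f : {poly K}) n :
  Mp p s -> t * s = 1 -> (forall i, isInt f`_i) -> (size f <= n.+1)%N ->
  exists e, Mp p e /\ f.[t] * s ^+ n = f`_n + e.
Proof.
move=> hs ts hf hsz.
rewrite (horner_coef_wide t hsz) big_ord_recr /= mulrDl.
exists ((\sum_(i < n) f`_i * t ^+ i) * s ^+ n); split; last first.
  by rewrite addrC -mulrA -exprMn ts expr1n mulr1.
rewrite mulr_suml; elim/big_ind: _ => //; [exact: Mp0 | exact: MpD |].
move=> [i hi] _ /=.
have -> : f`_i * t ^+ i * s ^+ n = (f`_i * s ^+ (n - i.+1)%N) * s.
  have e1 : t ^+ i * s ^+ i = 1 by rewrite -exprMn ts expr1n.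
  have -> : s ^+ n = s ^+ i * s ^+ (n - i.+1)%N * s.
    by rewrite -exprD -exprSr; congr (_ ^+ _); lia.
  have -> : f`_i * t ^+ i * (s ^+ i * s ^+ (n - i.+1)%N * s) =
     f`_i * (t ^+ i * s ^+ i) * s ^+ (n - i.+1)%N * s by ring.
  by rewrite e1 mulr1.
apply: (MpM hp) => //; apply: OlocM => //; first exact: Oloc_int.
by apply: OlocX => //; apply: Mp_Oloc.
Qed.

Lemma eval_O (t s : K) (f : {poly K}) n :
  Mp p s -> t * s = 1 -> (forall i, isInt f`_i) -> (size f <= n.+1)%N ->
  Oloc p (f.[t] * s ^+ n).
Proof.
move=> hs ts hf hsz; have [e [he ->]] := eval_rev hs ts hf hsz.
by apply: OlocD => //; [exact: Oloc_int | exact: Mp_Oloc].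
Qed.

Lemma eval_unit (t s : K) (f : {poly K}) n :
  Mp p s -> t * s = 1 -> (forall i, isInt f`_i) -> size f = n.+1 ->
  ~ p (lead_coef f) -> unitO (Oloc p) (f.[t] * s ^+ n).
Proof.
move=> hs ts hf hsz hl.
have [e [he ->]] := eval_rev hs ts hf (eq_leq hsz).
move: hl; rewrite lead_coefE hsz /= => hl.
by have [] := Mp_unit hp (hf n) hl he.
Qed.

End EvalRev.

Section PolyFacts.
Variable K : fieldExtType rat.

Definition pInt (f : {poly K}) := forall i, isInt f`_i.

Lemma pIntD f g : pInt f -> pInt g -> pInt (f + g).
Proof. by move=> hf hg i; rewrite coefD; apply: isIntD. Qed.
Lemma pIntN f : pInt f -> pInt (- f).
Proof. by move=> hf i; rewrite coefN; apply: isIntN. Qed.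
Lemma pIntB f g : pInt f -> pInt g -> pInt (f - g).
Proof. by move=> hf hg; apply: pIntD => //; apply: pIntN. Qed.
Lemma pIntM f g : pInt f -> pInt g -> pInt (f * g).
Proof.
move=> hf hg i; rewrite coefM; elim/big_ind: _ => //; [exact: isInt0 | exact: isIntD |].
by move=> j _; apply: isIntM.
Qed.
Lemma pInt_nat n : pInt (n%:R : {poly K}).
Proof.
move=> i; rewrite -polyC_natr coefC; case: (i == 0%N); [exact: isInt_nat | exact: isInt0].
Qed.
Lemma pIntX f n : pInt f -> pInt (f ^+ n).
Proof.
move=> hf; elim: n => [|n IH]; first by rewrite expr0; exact: pInt_nat 1.
by rewrite exprS; apply: pIntM.
Qed.

Lemma nat_neq0 n : (0 < n)%N -> (n%:R : K) != 0.
Proof. exact: natK_neq0. Qed.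

Lemma size_natM n (f : {poly K}) : (0 < n)%N -> size (n%:R * f) = size f.
Proof. by move=> hn; rewrite -polyC_natr size_Cmul // nat_neq0. Qed.

Lemma lead_natM n (f : {poly K}) : lead_coef (n%:R * f) = n%:R * lead_coef f.
Proof. by rewrite -polyC_natr lead_coefM lead_coefC. Qed.

Lemma size_sub_le (f g : {poly K}) k :
  (size f <= k)%N -> (size g <= k)%N -> (size (f - g)%R <= k)%N.
Proof.
move=> hf hg; apply: leq_trans (size_polyD _ _) _.
by rewrite size_polyN geq_max hf hg.
Qed.

Lemma size_mul_le (f g : {poly K}) k l :
  (size f <= k.+1)%N -> (size g <= l.+1)%N -> (size (f * g)%R <= (k + l).+1)%N.
Proof.
move=> hf hg; apply: leq_trans (size_polyMleq _ _) _.
move: hf hg; move: (size f) (size g) => x y; lia.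
Qed.

Lemma deg_ab (a b : {poly K}) m :
  (size (a ^+ 2 - 3 * b)%R <= (4 * m).+1)%N ->
  (size (2 * a ^+ 3 - 9 * a * b)%R <= (6 * m).+1)%N ->
  (size a <= (2 * m).+1)%N /\ (size b <= (4 * m).+1)%N.
Proof.
set c := a ^+ 2 - 3 * b; set e := 2 * a ^+ 3 - 9 * a * b => hc he.
have ha : (size a <= (2 * m).+1)%N.
  rewrite leqNgt; apply/negP => hlt.
  have a0 : a != 0 by rewrite -size_poly_gt0; lia.
  have id3 : a ^+ 3 = 3 * a * c - e by rewrite /c /e; ring.
  have s3 := size_exp a 3.
  have : (size (3 * a * c - e)%R <= (3 * (size a).-1 + 1) - 1)%N.
    apply: size_sub_le; last first.
      apply: leq_trans he _; move: hlt; move: (size a) => x; lia.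
    rewrite -mulrA size_natM //.
    have ha' : (size a <= (size a).-1.+1)%N by move: (size a) => x; lia.
    apply: leq_trans (size_mul_le ha' hc) _.
    move: hlt; move: (size a) => x; lia.
  rewrite -id3; move: s3 hlt; move: (size (a ^+ 3)) (size a) => x y; lia.
split => //.
have id : 3 * b = a ^+ 2 - c by rewrite /c; ring.
have : (size (3 * b)%R <= (4 * m).+1)%N.
  rewrite id; apply: size_sub_le => //.
  rewrite expr2; have := size_mul_le ha ha; congr (_ <= _)%N; lia.
by rewrite size_natM.
Qed.

End PolyFacts.

Lemma frac_repr (R : idomainType) (x : {fraction R}) :
  exists n d : R, d != 0 /\ x = (FracField.tofrac n) / (FracField.tofrac d).
Proof.
elim/quotW: x => x.
exists (\n_x), (\d_x); split; first exact: denom_ratioP.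
unlock FracField.tofrac.
rewrite !piE.
apply/eqP; rewrite FracField.equivf_def /FracField.mulf /FracField.invf.
rewrite !numden_Ratio ?oner_eq0 ?mulf_neq0 ?denom_ratioP // ?oner_eq0 //.
by rewrite mul1r mulr1 mulrC.
Qed.

Section Infinity.
Variable K : fieldType.

Lemma size_pos (p : {poly K}) : p != 0 -> (0 < size p)%N.
Proof. by rewrite size_poly_gt0. Qed.

Lemma tof_inj (p q : {poly K}) : tof p = tof q -> p = q.
Proof. by move/eqP; rewrite /tof tofrac_eq => /eqP. Qed.
Lemma tof_eq0 (p : {poly K}) : (tof p == 0) = (p == 0).
Proof. exact: tofrac_eq0. Qed.
Lemma tofM (p q : {poly K}) : tof (p * q) = tof p * tof q.
Proof. exact: rmorphM. Qed.
Lemma tofD (p q : {poly K}) : tof (p + q) = tof p + tof q.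
Proof. exact: rmorphD. Qed.
Lemma frac_add (x y z w : FT K) : y != 0 -> w != 0 -> x / y + z / w = (x * w + z * y) / (y * w).
Proof. exact: addf_div. Qed.
Lemma frac_mul (x y z w : FT K) : x / y * (z / w) = (x * z) / (y * w).
Proof. exact: mulf_div. Qed.

Lemma O_inf_D (x y : FT K) : O_inf x -> O_inf y -> O_inf (x + y).
Proof.
move=> [g [h [hn [hs ->]]]] [g' [h' [hn' [hs' ->]]]].
exists (g * h' + g' * h), (h * h'); split; first by rewrite mulf_neq0.
split.
  apply: leq_trans (size_polyD _ _) _; rewrite geq_max (size_mul hn hn').
  apply/andP; split; apply: leq_trans (size_polyMleq _ _) _.
    by rewrite -!subn1 leq_sub2r // leq_add2r.
  by rewrite -!subn1 leq_sub2r // addnC leq_add2l.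
have t1 : tof h != 0 by rewrite tof_eq0.
have t2 : tof h' != 0 by rewrite tof_eq0.
by rewrite tofD !tofM frac_add.
Qed.

Lemma O_inf_M (x y : FT K) : O_inf x -> O_inf y -> O_inf (x * y).
Proof.
move=> [g [h [hn [hs ->]]]] [g' [h' [hn' [hs' ->]]]].
exists (g * g'), (h * h'); split; first by rewrite mulf_neq0.
split.
  apply: leq_trans (size_polyMleq _ _) _; rewrite (size_mul hn hn').
  by rewrite -!subn1; apply: leq_sub2r; exact: leq_add.
have t1 : tof h != 0 by rewrite tof_eq0.
have t2 : tof h' != 0 by rewrite tof_eq0.
by rewrite !tofM frac_mul.
Qed.

Lemma O_inf_C (c : K) : O_inf (tof c%:P).
Proof.
exists c%:P, 1; split; first exact: oner_neq0.
split; last by rewrite /tof rmorph1 divr1.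
by rewrite size_poly1 size_polyC_leq1.
Qed.

Lemma O_inf_N (x : FT K) : O_inf x -> O_inf (- x).
Proof.
move=> h; rewrite -mulN1r; apply: O_inf_M => //.
have := O_inf_C (-1); by rewrite /tof polyCN rmorphN polyC1 rmorph1.
Qed.

Lemma O_inf_nat n : O_inf (n%:R : FT K).
Proof. by have := O_inf_C n%:R; rewrite polyC_natr /tof rmorph_nat. Qed.

Lemma O_inf_B (x y : FT K) : O_inf x -> O_inf y -> O_inf (x - y).
Proof. by move=> hx hy; apply: O_inf_D => //; apply: O_inf_N. Qed.

Lemma O_inf_X (x : FT K) n : O_inf x -> O_inf (x ^+ n).
Proof.
move=> h; elim: n => [|n IH]; first by rewrite expr0; have := O_inf_nat 1.
by rewrite exprS; apply: O_inf_M.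
Qed.

Lemma size_mulD (p q : {poly K}) : p != 0 -> q != 0 ->
  (size (p * q)).-1 = ((size p).-1 + (size q).-1)%N.
Proof.
move=> hp hq; rewrite size_mul //.
have := size_pos hp; have := size_pos hq; move: (size p) (size q) => x y; lia.
Qed.

Lemma deg_le (P A B : {poly K}) (x : FT K) : P != 0 -> A != 0 -> B != 0 ->
  O_inf x -> tof P * tof A = tof B * x ->
  ((size P).-1 + (size A).-1 <= (size B).-1)%N.
Proof.
move=> hP hA hB [g [h [hn [hs ex]]]] e.
have th : tof h != 0 by rewrite tof_eq0.
have E : P * A * h = B * g.
  by apply: tof_inj; rewrite !tofM e ex -mulrA divfK.
have hg : g != 0.
  apply/eqP => g0; move: E; rewrite g0 mulr0 => /eqP.
  by rewrite !mulf_eq0 (negPf hP) (negPf hA) (negPf hn).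
have := congr1 (fun q : {poly K} => (size q).-1) E => /=.
rewrite !size_mulD ?mulf_neq0 //.
move: hs; move: (size P) (size A) (size B) (size g) (size h) => ????? ; lia.
Qed.

End Infinity.

Section Invariants.
Variable F : fieldType.

Lemma wiso_inv (E E' : wmodel F) : wiso E E' ->
  exists u, u != 0 /\ wc4 E = u ^+ 4 * wc4 E' /\ wc6 E = u ^+ 6 * wc6 E' /\
    wdisc E = u ^+ 12 * wdisc E'.
Proof.
move=> [u [r [s [w [un [e1 [e2 [e3 [e4 e6]]]]]]]]].
exists u; split => //.
pose E2 := WModel (u * wa1 E') (u ^+ 2 * wa2 E') (u ^+ 3 * wa3 E')
                  (u ^+ 4 * wa4 E') (u ^+ 6 * wa6 E').
have H4 : u ^+ 4 * wc4 E' = wc4 E2 by rewrite /wc4 /wb2 /wb4 /=; ring.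
have H6 : u ^+ 6 * wc6 E' = wc6 E2 by rewrite /wc6 /wb2 /wb4 /wb6 /=; ring.
have H12 : u ^+ 12 * wdisc E' = wdisc E2
  by rewrite /wdisc /wb2 /wb4 /wb6 /wb8 /=; ring.
rewrite H4 H6 H12 /E2 e1 e2 e3 e4 e6.
split; first by rewrite /wc4 /wb2 /wb4 /=; ring.
split; first by rewrite /wc6 /wb2 /wb4 /wb6 /=; ring.
by rewrite /wdisc /wb2 /wb4 /wb6 /wb8 /=; ring.
Qed.

Lemma model2_c4 (A B : F) : wc4 (model2 A B) = 16 * (A ^+ 2 - 3 * B).
Proof. by rewrite /wc4 /wb2 /wb4 /=; ring. Qed.
Lemma model2_c6 (A B : F) : wc6 (model2 A B) = - 32 * (2 * A ^+ 3 - 9 * A * B).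
Proof. by rewrite /wc6 /wb2 /wb4 /wb6 /=; ring. Qed.
Lemma model2_disc (A B : F) : wdisc (model2 A B) = 16 * (A ^+ 2 - 4 * B) * B ^+ 2.
Proof. by rewrite /wdisc /wb2 /wb4 /wb6 /wb8 /=; ring. Qed.

End Invariants.

Lemma pPrime (K : fieldExtType rat) (p : K -> Prop) : nzprime p ->
  forall x y, isInt x -> isInt y -> p (x * y) -> p x \/ p y.
Proof. by case=> _ [_ [_ [_ [_ []]]]]. Qed.

Lemma wiso_scale (F : fieldType) (A B u v : F) : u * v = 1 ->
  wiso (model2 A B) (model2 (A * v ^+ 2) (B * v ^+ 4)).
Proof.
move=> uv; exists u, 0, 0, 0.
have un : u != 0 by apply/eqP => u0; move: uv; rewrite u0 mul0r => /eqP; rewrite eq_sym oner_eq0.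
have e k : u ^+ k * v ^+ k = 1 by rewrite -exprMn uv expr1n.
split => //=.
split; first by rewrite mulr0 mulr0 addr0.
split; first by rewrite mulrCA e; ring.
split; first by rewrite !mulr0 !addr0.
split; first by rewrite mulrCA e; ring.
by rewrite mulr0; ring.
Qed.

Lemma horner_nat (K : fieldType) n (x : K) : (n%:R : {poly K}).[x] = n%:R.
Proof. by rewrite -polyC_natr hornerC. Qed.

Lemma tofX (K : fieldType) (p : {poly K}) k : tof (p ^+ k) = tof p ^+ k.
Proof. exact: rmorphXn. Qed.
Lemma tof_nat (K : fieldType) n : tof (n%:R : {poly K}) = n%:R.
Proof. exact: rmorph_nat. Qed.
Lemma tofB (K : fieldType) (p q : {poly K}) : tof (p - q) = tof p - tof q.
Proof. exact: rmorphB. Qed.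
Lemma tofN (K : fieldType) (p : {poly K}) : tof (- p) = - tof p.
Proof. exact: rmorphN. Qed.

Lemma polynat_neq0 (K : fieldExtType rat) n : (0 < n)%N -> (n%:R : {poly K}) != 0.
Proof. by move=> hn; rewrite -polyC_natr polyC_eq0 natK_neq0. Qed.

Lemma pMl (K : fieldExtType rat) (p : K -> Prop) : nzprime p ->
  forall r x, isInt r -> p x -> p (r * x).
Proof. by case=> _ [_ [_ []]]. Qed.

Lemma frac_repr_tof (K : fieldType) (x : FT K) :
  exists n d : {poly K}, d != 0 /\ x = tof n / tof d.
Proof. exact: frac_repr. Qed.

Ltac oinf := repeat first [ apply: O_inf_nat | apply: O_inf_D | apply: O_inf_B
  | apply: O_inf_M | apply: O_inf_X | apply: O_inf_N | assumption ].

Lemma degree_facts (K : fieldExtType rat) (a b : {poly K}) :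
  b != 0 -> a ^+ 2 - 4 * b != 0 -> good_red (@O_inf K) (model2 (tof a) (tof b)) ->
  exists m : nat, (size a <= (2 * m).+1)%N /\ size b = (4 * m).+1 /\
    size (a ^+ 2 - 4 * b) = (4 * m).+1.
Proof.
move=> b0 d0 [E' [hiso [[h1 [h2 [h3 [h4 h6]]]] [hu1 hu2]]]].
set d := a ^+ 2 - 4 * b in d0 *.
have [u [un [c4e [c6e de]]]] := wiso_inv hiso.
have [f1 [f2 [f2n ue]]] := frac_repr_tof u.
have tf2 : tof f2 != 0 by rewrite tof_eq0.
have f1n : f1 != 0.
  by apply/eqP => f10; move: un; rewrite ue f10 /tof rmorph0 mul0r eqxx.
have Oc4 : O_inf (wc4 E') by rewrite /wc4 /wb2 /wb4; oinf.
have Oc6 : O_inf (wc6 E') by rewrite /wc6 /wb2 /wb4 /wb6; oinf.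
have key : forall (P : {poly K}) k x, O_inf x -> tof P = u ^+ k * x -> P != 0 ->
    ((size P).-1 + (size f2).-1 * k <= (size f1).-1 * k)%N.
  move=> P k x hx e hP; rewrite -!size_exp.
  apply: (deg_le hP _ _ hx); rewrite ?expf_neq0 //.
  rewrite !tofX e ue expr_div_n.
  by rewrite -mulrA (mulrC x) mulrA (divfK (expf_neq0 k tf2)).
have n16 : (16%:R : {poly K}) != 0 by apply: polynat_neq0.
have D0 : 16 * d * b ^+ 2 != 0 by rewrite !mulf_neq0 ?expf_neq0.
have eD : tof (16 * d * b ^+ 2) = u ^+ 12 * wdisc E'.
  by rewrite -de model2_disc /d !(tofM, tofB, tofX, tof_nat).
have eC4 : tof (16 * (a ^+ 2 - 3 * b)) = u ^+ 4 * wc4 E'.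
  by rewrite -c4e model2_c4 !(tofM, tofB, tofX, tof_nat).
have eC6 : tof (- 32 * (2 * a ^+ 3 - 9 * a * b)) = u ^+ 6 * wc6 E'.
  by rewrite -c6e model2_c6 !(tofM, tofB, tofX, tof_nat, tofN).
have Dn : wdisc E' != 0.
  apply/eqP => z; move: D0; rewrite -tof_eq0 eD z mulr0 eqxx //.
have kD := key _ _ _ hu1 eD D0.
have lD : ((size (f1 ^+ 12)%R).-1 + (size (1%R : {poly K})).-1 <=
           (size (16 * d * b ^+ 2 * f2 ^+ 12)%R).-1)%N.
  apply: (deg_le _ _ _ hu2); rewrite ?expf_neq0 ?oner_neq0 ?mulf_neq0 //.
  rewrite (tofM (16 * d * b ^+ 2)) eD ue !tofX expr_div_n.
  have -> : tof (1 : {poly K}) = 1 by exact: rmorph1.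
  by rewrite mulr1 (mulrAC _ (wdisc E')) (divfK (expf_neq0 12 tf2)) (mulfK Dn).
rewrite size_exp size_poly1 size_mulD ?expf_neq0 // size_exp in lD.
set D1 := (size f1).-1 in kD lD key; set D2 := (size f2).-1 in kD lD key.
set sD := (size (16 * d * b ^+ 2)).-1 in kD lD.
exists (D1 - D2)%N.
have hc : (size (a ^+ 2 - 3 * b)%R <= (4 * (D1 - D2)).+1)%N.
  have [c0|c0] := eqVneq (a ^+ 2 - 3 * b) 0; first by rewrite c0 size_poly0.
  have := key _ _ _ Oc4 eC4 (mulf_neq0 n16 c0); rewrite size_natM //.
  move: (size (a ^+ 2 - 3 * b)) => x; rewrite -/D1 -/D2; move: kD lD; rewrite -/sD.
  move=> *; lia.
have he : (size (2 * a ^+ 3 - 9 * a * b)%R <= (6 * (D1 - D2)).+1)%N.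
  have [c0|c0] := eqVneq (2 * a ^+ 3 - 9 * a * b) 0; first by rewrite c0 size_poly0.
  have n32 : (- 32 : {poly K}) != 0 by rewrite oppr_eq0 polynat_neq0.
  have := key _ _ _ Oc6 eC6 (mulf_neq0 n32 c0); rewrite mulNr size_polyN size_natM //.
  move: (size (2 * a ^+ 3 - 9 * a * b)) => x; rewrite -/D1 -/D2; move: kD lD; rewrite -/sD.
  move=> *; lia.
have [ha hb] := deg_ab hc he.
have hd : (size d <= (4 * (D1 - D2)).+1)%N.
  apply: size_sub_le; last by rewrite size_natM.
  rewrite expr2; have := size_mul_le ha ha; congr (_ <= _)%N; lia.
have sDe : sD = (size d).-1 + (size b).-1 * 2.
  rewrite /sD -mulrA size_natM // size_mulD ?expf_neq0 // size_exp //.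
have bpos : (0 < size b)%N by rewrite size_poly_gt0.
have dpos : (0 < size d)%N by rewrite size_poly_gt0.
clear key hc he; move: kD lD sDe hb hd bpos dpos ha; rewrite -/sD.
move: (size a) (size b) (size d) sD D1 D2 => x y z w v q.
move=> *; split => //; lia.
Qed.
Theorem main_aux (K : fieldExtType rat) (a b : {poly K})
    (Bs As Ms Mps : seq K) (S0 : seq (K -> Prop)) :
  (forall i, isInt a`_i) -> (forall i, isInt b`_i) ->
  b != 0 -> a ^+ 2 - 4 * b != 0 ->
  (forall q, closed_fin q ->
     minimal_model (O_fin q) (tof q) (model2 (tof a) (tof b))) ->
  uniq Bs -> (forall al, al \in Bs -> isInt al) ->
  (forall q, closed_fin q ->
     (~ good_red (O_fin q) (model2 (tof a) (tof b)) <->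
      exists2 al, al \in Bs & q = 'X - al%:P)) ->
  good_red (@O_inf K) (model2 (tof a) (tof b)) ->
  uniq As ->
  (forall al, al \in As <-> al \in Bs /\
     Defs.additive (O_fin ('X - al%:P)) (tof ('X - al%:P)) (model2 (tof a) (tof b))) ->
  uniq Ms ->
  (forall al, al \in Ms <-> al \in Bs /\
     ~ Defs.additive (O_fin ('X - al%:P)) (tof ('X - al%:P)) (model2 (tof a) (tof b)) /\
     exists n, (0 < n)%N /\
       mult_In (O_fin ('X - al%:P)) (tof ('X - al%:P)) (n.*2) (model2 (tof a) (tof b)) /\
       mult_In (O_fin ('X - al%:P)) (tof ('X - al%:P)) n
               (model2 (tof (- 2 * a)) (tof (a ^+ 2 - 4 * b)))) ->
  uniq Mps ->
  (forall al, al \in Mps <-> al \in Bs /\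
     ~ Defs.additive (O_fin ('X - al%:P)) (tof ('X - al%:P)) (model2 (tof a) (tof b)) /\
     exists n, (0 < n)%N /\
       mult_In (O_fin ('X - al%:P)) (tof ('X - al%:P)) n (model2 (tof a) (tof b)) /\
       mult_In (O_fin ('X - al%:P)) (tof ('X - al%:P)) (n.*2)
               (model2 (tof (- 2 * a)) (tof (a ^+ 2 - 4 * b)))) ->
  Ms != [::] -> Mps != [::] ->
  (forall al, al \in Ms ->
     split_mult (O_fin ('X - al%:P)) (tof ('X - al%:P))
                (model2 (tof (- 2 * a)) (tof (a ^+ 2 - 4 * b))) \/
     exists n, odd n /\ mult_In (O_fin ('X - al%:P)) (tof ('X - al%:P)) n
                          (model2 (tof (- 2 * a)) (tof (a ^+ 2 - 4 * b)))) ->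
  (forall al, al \in Mps ->
     split_mult (O_fin ('X - al%:P)) (tof ('X - al%:P)) (model2 (tof a) (tof b)) \/
     exists n, odd n /\ mult_In (O_fin ('X - al%:P)) (tof ('X - al%:P)) n
                          (model2 (tof a) (tof b))) ->
  (forall al, al \in As -> forall n,
     kodaira_Instar (O_fin ('X - al%:P)) (tof ('X - al%:P)) n (model2 (tof a) (tof b)) ->
     tamagawa4_Instar (O_fin ('X - al%:P)) (tof ('X - al%:P)) (model2 (tof a) (tof b)) /\
     tamagawa4_Instar (O_fin ('X - al%:P)) (tof ('X - al%:P))
                      (model2 (tof (- 2 * a)) (tof (a ^+ 2 - 4 * b)))) ->
  (exists pts : seq (option (FT K * FT K)),
     size pts = (size As + size Ms).-1 /\
     (forall P, P \in pts -> on_curve2 (tof a) (tof b) P) /\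
     sq_indep (map (delta2 (tof b)) pts)) ->
  (exists pts : seq (option (FT K * FT K)),
     size pts = (size As + size Mps).-1 /\
     (forall P, P \in pts -> on_curve2 (tof (- 2 * a)) (tof (a ^+ 2 - 4 * b)) P) /\
     sq_indep (map (delta2 (tof (a ^+ 2 - 4 * b))) pts)) ->
  (forall i, (i < size S0)%N -> nzprime (nth (fun _ => False) S0 i)) ->
  (forall p, nzprime p ->
     (p 6 \/
      (exists al be, al \in Bs /\ be \in Bs /\ al != be /\ p (al - be)) \/
      p (lead_coef (16 * (a ^+ 2 - 4 * b) * b ^+ 2))) ->
     inP p S0) ->
  is_PID_OS S0 ->
  exists exc : seq (K -> Prop),
    forall p, nzprime p -> ~ inP p S0 -> ~ inP p exc ->
    forall t : K, t \notin Bs -> ~ Oloc p t ->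
      good_red (Oloc p) (model2 a.[t] b.[t]) /\
      good_red (Oloc p) (model2 (- 2 * a.[t]) (a.[t] ^+ 2 - 4 * b.[t])).
Proof.
move=> aI bI b0 d0 _ _ _ _ ginf _ _ _ _ _ _ _ _ _ _ _ _ _ _ S0cov PID.
have [m [hsa [hsb hsd]]] := degree_facts b0 d0 ginf.
set d := a ^+ 2 - 4 * b in d0 hsd *.
have pIa : pInt a := aI.
have pIb : pInt b := bI.
have pId : pInt d by apply: pIntB; [apply: pIntX | apply: pIntM; [apply: pInt_nat|]].
have n16 : (16%:R : {poly K}) != 0 by apply: polynat_neq0.
have b_0 : b != 0 := b0.
have sD : size (16 * d * b ^+ 2) = (m * 12).+1.
  apply/eqP; rewrite -(eqn_add2r 0) -[X in (X + 0)%N](@prednK (size _)); last first.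
    by rewrite size_poly_gt0 !mulf_neq0 ?expf_neq0.
  rewrite -mulrA size_natM // size_mulD ?expf_neq0 // size_exp hsb hsd /=.
  apply/eqP; lia.
have sD' : size (16 * d ^+ 2 * (16 * b)) = (m * 12).+1.
  apply/eqP; rewrite -(eqn_add2r 0) -[X in (X + 0)%N](@prednK (size _)); last first.
    by rewrite size_poly_gt0 !mulf_neq0 ?expf_neq0.
  rewrite size_mulD ?mulf_neq0 ?expf_neq0 // !size_natM // size_exp hsb hsd /=.
  apply/eqP; lia.
exists [::] => p hp pS0 _ t _ nt.
have [g hg] := Ip_ideal PID hp pS0.
have hs := valuation PID hp pS0 hg nt.
set s := t^-1 in hs.
have t0 : t != 0.
  by apply/eqP => t0; apply: nt; rewrite t0; apply: (Oloc_int hp); exact: isInt0.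
have ts : t * s = 1 by rewrite /s divff.
have tsm : t ^+ m * s ^+ m = 1 by rewrite -exprMn ts expr1n.
have hpl : ~ p (lead_coef (16 * d * b ^+ 2)).
  by move=> h; apply: pS0; apply: S0cov => //; right; right.
have lD : lead_coef (16 * d * b ^+ 2) = 16 * lead_coef d * lead_coef b ^+ 2.
  by rewrite lead_coefM lead_coef_exp lead_coefM -polyC_natr lead_coefC.
have lD' : lead_coef (16 * d ^+ 2 * (16 * b)) =
    16 * lead_coef d ^+ 2 * (16 * lead_coef b).
  by rewrite lead_coefM (lead_coefM 16) (lead_coefM 16) lead_coef_exp -polyC_natr lead_coefC.
have iLd : isInt (lead_coef d) by rewrite lead_coefE; apply: pId.
have iLb : isInt (lead_coef b) by rewrite lead_coefE; apply: pIb.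
have i16 : isInt (16%:R : K) by apply: isInt_nat.
have hpl' : ~ p (lead_coef (16 * d ^+ 2 * (16 * b))).
  rewrite lD'; move: hpl; rewrite lD => hpl h; apply: hpl.
  have p16 : p 16 -> p (16 * lead_coef d * lead_coef b ^+ 2).
    by move=> h16; apply: (pMr hp); [apply: isIntX | apply: (pMr hp)].
  have pd : p (lead_coef d) -> p (16 * lead_coef d * lead_coef b ^+ 2).
    by move=> h1; apply: (pMr hp); [apply: isIntX | apply: (pMl hp)].
  have pb : p (lead_coef b) -> p (16 * lead_coef d * lead_coef b ^+ 2).
    move=> h1; apply: (pMl hp); first exact: isIntM.
    by rewrite expr2; apply: (pMr hp).
  case: (pPrime hp _ _ h) => [||h1|h1].
  - by apply: isIntM => //; apply: isIntX.
  - exact: isIntM.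
  - case: (pPrime hp _ _ h1) => // [|h2]; first exact: isIntX.
    by move: h2; rewrite expr2 => /(pPrime hp iLd iLd) [].
  - by case: (pPrime hp _ _ h1) => //.
have eS k : (s ^+ m) ^+ k = s ^+ (m * k) by rewrite exprM.
split.
  exists (model2 (a.[t] * (s ^+ m) ^+ 2) (b.[t] * (s ^+ m) ^+ 4)).
  split; first exact: (wiso_scale _ _ tsm).
  split.
    split; first by apply: (Oloc_int hp); exact: isInt0.
    split; first by rewrite (eS 2); apply: (eval_O hp hs ts) => //; lia.
    split; first by apply: (Oloc_int hp); exact: isInt0.
    split; first by rewrite (eS 4); apply: (eval_O hp hs ts) => //; apply: leq_trans (eq_leq hsb) _; rewrite mulnC.
    by apply: (Oloc_int hp); exact: isInt0.
  have -> : wdisc (model2 (a.[t] * (s ^+ m) ^+ 2) (b.[t] * (s ^+ m) ^+ 4)) =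
      (16 * d * b ^+ 2).[t] * (s ^+ m) ^+ 12.
    rewrite model2_disc /d !(horner_nat, hornerM, hornerD, hornerN, horner_exp).
    ring.
  rewrite (eS 12); apply: (eval_unit hp hs ts) => //.
  by apply: pIntM; [apply: pIntM; [apply: pInt_nat|] | apply: pIntX].
pose a2 := (- 2) * a.
have ea2 : a2.[t] = - 2 * a.[t].
  by rewrite /a2 !(horner_nat, hornerM, hornerN).
have ed : d.[t] = a.[t] ^+ 2 - 4 * b.[t].
  by rewrite /d !(horner_nat, hornerM, hornerD, hornerN, horner_exp).
have pIa2 : pInt a2 by apply: pIntM => //; apply: pIntN; apply: pInt_nat.
have sa2 : (size a2 <= (2 * m).+1)%N.
  by rewrite /a2 mulNr size_polyN size_natM.
exists (model2 (a2.[t] * (s ^+ m) ^+ 2) (d.[t] * (s ^+ m) ^+ 4)).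
split; first by rewrite -ea2 -ed; exact: (wiso_scale _ _ tsm).
split.
  split; first by apply: (Oloc_int hp); exact: isInt0.
  split; first by rewrite (eS 2); apply: (eval_O hp hs ts) => //; apply: leq_trans sa2 _; rewrite mulnC.
  split; first by apply: (Oloc_int hp); exact: isInt0.
  split; first by rewrite (eS 4); apply: (eval_O hp hs ts) => //; apply: leq_trans (eq_leq hsd) _; rewrite mulnC.
  by apply: (Oloc_int hp); exact: isInt0.
have -> : wdisc (model2 (a2.[t] * (s ^+ m) ^+ 2) (d.[t] * (s ^+ m) ^+ 4)) =
    (16 * d ^+ 2 * (16 * b)).[t] * (s ^+ m) ^+ 12.
  rewrite model2_disc ea2 !(horner_nat, hornerM, hornerD, hornerN, horner_exp).
  ring.
rewrite (eS 12); apply: (eval_unit hp hs ts) => //.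
by apply: pIntM; [apply: pIntM; [apply: pInt_nat| apply: pIntX] | apply: pIntM; [apply: pInt_nat|]].
Qed.

End Aux.

Theorem lemma5p4 (K : fieldExtType rat) (a b : {poly K})
    (Bs As Ms Mps : seq K) (S0 : seq (K -> Prop)) :
  (* a, b in O_K[T]; E is an elliptic curve (Delta <> 0) *)
  (forall i, isInt a`_i) -> (forall i, isInt b`_i) ->
  b != 0 -> a ^+ 2 - 4 * b != 0 ->
  (* the model is minimal over K[T] *)
  (forall q, closed_fin q ->
     minimal_model (O_fin q) (tof q) (model2 (tof a) (tof b))) ->
  (* B = bad closed points, all of degree 1, B subset O_K (not infinity) *)
  uniq Bs -> (forall al, al \in Bs -> isInt al) ->
  (forall q, closed_fin q ->
     (~ good_red (O_fin q) (model2 (tof a) (tof b)) <->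
      exists2 al, al \in Bs & q = 'X - al%:P)) ->
  good_red (@O_inf K) (model2 (tof a) (tof b)) ->
  (* A : additive points *)
  uniq As ->
  (forall al, al \in As <-> al \in Bs /\
     additive (O_fin ('X - al%:P)) (tof ('X - al%:P)) (model2 (tof a) (tof b))) ->
  (* M : E, E' have symbols I_{2n}, I_n *)
  uniq Ms ->
  (forall al, al \in Ms <-> al \in Bs /\
     ~ additive (O_fin ('X - al%:P)) (tof ('X - al%:P)) (model2 (tof a) (tof b)) /\
     exists n, (0 < n)%N /\
       mult_In (O_fin ('X - al%:P)) (tof ('X - al%:P)) (n.*2) (model2 (tof a) (tof b)) /\
       mult_In (O_fin ('X - al%:P)) (tof ('X - al%:P)) n
               (model2 (tof (- 2 * a)) (tof (a ^+ 2 - 4 * b)))) ->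
  (* M' : E, E' have symbols I_n, I_{2n} *)
  uniq Mps ->
  (forall al, al \in Mps <-> al \in Bs /\
     ~ additive (O_fin ('X - al%:P)) (tof ('X - al%:P)) (model2 (tof a) (tof b)) /\
     exists n, (0 < n)%N /\
       mult_In (O_fin ('X - al%:P)) (tof ('X - al%:P)) n (model2 (tof a) (tof b)) /\
       mult_In (O_fin ('X - al%:P)) (tof ('X - al%:P)) (n.*2)
               (model2 (tof (- 2 * a)) (tof (a ^+ 2 - 4 * b)))) ->
  (* (b) *)
  Ms != [::] -> Mps != [::] ->
  (* (c) *)
  (forall al, al \in Ms ->
     split_mult (O_fin ('X - al%:P)) (tof ('X - al%:P))
                (model2 (tof (- 2 * a)) (tof (a ^+ 2 - 4 * b))) \/
     exists n, odd n /\ mult_In (O_fin ('X - al%:P)) (tof ('X - al%:P)) n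
                          (model2 (tof (- 2 * a)) (tof (a ^+ 2 - 4 * b)))) ->
  (* (d) *)
  (forall al, al \in Mps ->
     split_mult (O_fin ('X - al%:P)) (tof ('X - al%:P)) (model2 (tof a) (tof b)) \/
     exists n, odd n /\ mult_In (O_fin ('X - al%:P)) (tof ('X - al%:P)) n
                          (model2 (tof a) (tof b))) ->
  (* (e) *)
  (forall al, al \in As -> forall n,
     kodaira_Instar (O_fin ('X - al%:P)) (tof ('X - al%:P)) n (model2 (tof a) (tof b)) ->
     tamagawa4_Instar (O_fin ('X - al%:P)) (tof ('X - al%:P)) (model2 (tof a) (tof b)) /\
     tamagawa4_Instar (O_fin ('X - al%:P)) (tof ('X - al%:P))
                      (model2 (tof (- 2 * a)) (tof (a ^+ 2 - 4 * b)))) ->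
  (* (f) dim delta_E(E(K(T))) >= |A| + |M| - 1 *)
  (exists pts : seq (option (FT K * FT K)),
     size pts = (size As + size Ms).-1 /\
     (forall P, P \in pts -> on_curve2 (tof a) (tof b) P) /\
     sq_indep (map (delta2 (tof b)) pts)) ->
  (* (g) dim delta_E'(E'(K(T))) >= |A| + |M'| - 1 *)
  (exists pts : seq (option (FT K * FT K)),
     size pts = (size As + size Mps).-1 /\
     (forall P, P \in pts -> on_curve2 (tof (- 2 * a)) (tof (a ^+ 2 - 4 * b)) P) /\
     sq_indep (map (delta2 (tof (a ^+ 2 - 4 * b))) pts)) ->
  (* S_0 *)
  (forall i, (i < size S0)%N -> nzprime (nth (fun _ => False) S0 i)) ->
  (forall p, nzprime p ->
     (p 6 \/
      (exists al be, al \in Bs /\ be \in Bs /\ al != be /\ p (al - be)) \/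
      p (lead_coef (16 * (a ^+ 2 - 4 * b) * b ^+ 2))) ->
     inP p S0) ->
  is_PID_OS S0 ->
  (* conclusion *)
  exists exc : seq (K -> Prop),
    forall p, nzprime p -> ~ inP p S0 -> ~ inP p exc ->
    forall t : K, t \notin Bs -> ~ Oloc p t ->
      good_red (Oloc p) (model2 a.[t] b.[t]) /\
      good_red (Oloc p) (model2 (- 2 * a.[t]) (a.[t] ^+ 2 - 4 * b.[t])).
Proof.
exact: Aux.main_aux.
Qed.
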